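(* For every integer $s\ge 3$ there exists a constant $C>0$ such that every graph $G$ with no stable set of size $s$ admits a clique cover of size at most $C|G|^{2-\frac{1}{s-1}}$.
   Context: All graphs are finite and simple; $|G|$ is the number of vertices of $G$. A clique $X$ of $G$ covers an edge $uv$ if $u,v\in X$; a clique cover of $G$ is a collection of cliques of $G$ that together cover all edges of $G$, and its size is the number of cliques in it. *)

(* Defs.v *)
From mathcomp Require Import all_boot.
From Stdlib Require Import Reals.
Set Implicit Arguments. Unset Strict Implicit. Unset Printing Implicit Defensive.

Definition simple_graph (T : finType) (e : rel T) : Prop :=
  symmetric e /\ irreflexive e.

Definition is_clique (T : finType) (e : rel T) (X : {set T}) : Prop :=
  forall u v, u \in X -> v \in X -> u != v -> e u v.

Definition is_stable (T : finType) (e : rel T) (S : {set T}) : Prop :=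
  forall u v, u \in S -> v \in S -> ~~ e u v.

Definition is_clique_cover (T : finType) (e : rel T) (P : {set {set T}}) : Prop :=
  (forall X, X \in P -> is_clique e X) /\
  (forall u v, e u v -> exists2 X, X \in P & (u \in X) && (v \in X)).

(* Main.v *)
Require Import Defs.
From mathcomp Require Import all_boot zify.
From Stdlib Require Import Reals Lra.
Import ssrnat.

Lemma greedy (T : finType) (e : rel T) (He : simple_graph e) (A : {set T}) (m : nat)
  (m0 : 0 < m)
  (HA : forall v, v \in A -> #|[set u in A | (u != v) && ~~ e v u]| < m) :
  forall j (B : {set T}), B \subset A -> j * m <= #|B| ->
  exists K : {set T}, [/\ K \subset B, is_clique e K & #|K| = j].
Proof.
have [Hsym Hirr] := He.
elim=> [|j IH] B sBA hB.
  exists set0; split; [exact: sub0set| |by rewrite cards0].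
  by move=> u v; rewrite in_set0.
have : 0 < #|B| by move: hB; rewrite mulSn; lia.
rewrite card_gt0 => /set0Pn [v vB].
have vA : v \in A by apply: (subsetP sBA).
set B' := [set u in B | e v u].
set NN := [set u in A | (u != v) && ~~ e v u].
have sub : B \subset v |: (B' :|: NN).
  apply/subsetP => u uB; rewrite !inE.
  case: (eqVneq u v) => //= uv.
  case evu: (e v u); first by rewrite uB.
  by rewrite (subsetP sBA _ uB) orbT.
have hNN : #|NN| < m := HA v vA.
have hB' : j * m <= #|B'|.
  have := subset_leq_card sub; rewrite cardsU1 cardsU.
  move: hB; rewrite mulSn.
  have hb : forall b : bool, (b:nat) <= 1 by case.
  have := hb (v \notin B' :|: NN); lia.
have sB'B : B' \subset B by apply/subsetP => u; rewrite inE => /andP[].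
have [K' [sK' cK' cardK']] := IH B' (subset_trans sB'B sBA) hB'.
have vK' : v \notin K'.
  apply/negP => /(subsetP sK'); rewrite inE Hirr andbF //.
exists (v |: K'); split.
- by rewrite subUset sub1set vB (subset_trans sK' sB'B).
- move=> x y; rewrite !inE => /orP[/eqP->|xK] /orP[/eqP->|yK]; rewrite ?eqxx //.
  + by move=> _; have := subsetP sK' _ yK; rewrite inE => /andP[].
  + by move=> _; have := subsetP sK' _ xK; rewrite inE => /andP[] _; rewrite Hsym.
  + by apply: cK'.
- by rewrite cardsU1 vK' cardK'.
Qed.

Lemma ramsey (T : finType) (e : rel T) (He : simple_graph e) :
  forall r t, 0 < t -> forall A : {set T},
  (forall S : {set T}, S \subset A -> #|S| = r.+1 -> ~ is_stable e S) ->
  t ^ r <= #|A| ->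
  exists K : {set T}, [/\ K \subset A, is_clique e K & #|K| = t].
Proof.
have [Hsym Hirr] := He.
elim=> [|r IH] t t0 A HS hA.
  exfalso; move: hA; rewrite expn0 card_gt0 => /set0Pn [x xA].
  apply: (HS [set x]); first by rewrite sub1set.
    by rewrite cards1.
  by move=> u v; rewrite !inE => /eqP-> /eqP->; rewrite Hirr.
case: (boolP [exists v in A, t ^ r <= #|[set u in A | (u != v) && ~~ e v u]|]).
  move=> /exists_inP [v vA hv].
  set NN := [set u in A | (u != v) && ~~ e v u] in hv.
  have sNA : NN \subset A by apply/subsetP => u; rewrite inE => /andP[].
  have [K [sK cK cardK]] : exists K : {set T}, [/\ K \subset NN, is_clique e K & #|K| = t].
    apply: IH => // S sS cS stS.
    have vS : v \notin S.
      by apply/negP => /(subsetP sS); rewrite inE eqxx /= andbF.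
    apply: (HS (v |: S)).
    - by rewrite subUset sub1set vA (subset_trans sS sNA).
    - by rewrite cardsU1 vS cS.
    move=> x y; rewrite !inE => /orP[/eqP->|xS] /orP[/eqP->|yS].
    + by rewrite Hirr.
    + by have := subsetP sS _ yS; rewrite inE => /and3P[].
    + by have := subsetP sS _ xS; rewrite inE Hsym => /and3P[].
    + by apply: stS.
  by exists K; split => //; apply: subset_trans sK sNA.
rewrite negb_exists_in => /forall_inP Hall.
apply: (@greedy T e He A (t ^ r)) => //.
- by rewrite expn_gt0 t0.
- by move=> v vA; rewrite ltnNge; apply: Hall.
- by rewrite -expnS.
Qed.

Lemma extract (T : finType) (e : rel T) (He : simple_graph e) r
  (Hs : forall S : {set T}, #|S| = r.+1 -> ~ is_stable e S) k (k0 : 0 < k) :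
  forall n (A : {set T}), #|A| <= n ->
  exists F : {set {set T}}, exists B : {set T},
   [/\ forall X, X \in F -> is_clique e X,
       forall x, x \in A -> x \in B \/ exists2 X, X \in F & x \in X,
       #|B| < k ^ r & #|F| * k <= #|A|].
Proof.
elim=> [|n IH] A hA.
  exists set0, A; split => //.
  - by move=> X; rewrite in_set0.
  - by move=> x xA; left.
  - by move: hA; rewrite leqn0 => /eqP->; rewrite expn_gt0 k0.
  - by rewrite cards0.
case: (ltnP #|A| (k ^ r)) => hAk.
  exists set0, A; split => //.
  - by move=> X; rewrite in_set0.
  - by move=> x xA; left.
  - by rewrite cards0.
have [K [sKA cK cardK]] := @ramsey T e He r k k0 A (fun S _ => Hs S) hAk.
have hA' : #|A :\: K| <= n.
  rewrite cardsD (setIidPr sKA) cardK; lia.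
have [F' [B [cF' covF' cB hF']]] := IH _ hA'.
exists (K |: F'), B; split => //.
- by move=> X; rewrite in_setU1 => /orP[/eqP->|/cF'].
- move=> x xA; case: (boolP (x \in K)) => xK.
    by right; exists K => //; rewrite setU11.
  have xA' : x \in A :\: K by rewrite inE xK xA.
  have [xB|[X XF xX]] := covF' x xA'; first by left.
  by right; exists X => //; rewrite setU1r.
- have h1 : #|K |: F'| <= #|F'|.+1 by rewrite cardsU1; case: (K \notin F').
  have h2 : #|K |: F'| * k <= #|F'|.+1 * k by rewrite leq_mul2r h1 orbT.
  move: hF' h2; rewrite cardsD (setIidPr sKA) cardK mulSn => hF' h2.
  have : k <= #|A| by rewrite -cardK subset_leq_card.
  move: (#|K |: F'| * k) (#|F'| * k) h2 hF' => a b; lia.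
Qed.

Lemma coverpow (T : finType) (e : rel T) (He : simple_graph e) q
  (q1 : 0 < q)
  (Hs : forall S : {set T}, #|S| = q.+2 -> ~ is_stable e S) :
  forall i (A : {set T}), #|A| <= (2 ^ i) ^ q.+1 ->
  exists F : {set {set T}},
   [/\ forall X, X \in F -> is_clique e X,
       forall x, x \in A -> exists2 X, X \in F & x \in X
     & #|F| <= 4 * (2 ^ i) ^ q].
Proof.
elim=> [|i IH] A hA.
  exists [set A]; split.
  - move=> X; rewrite inE => /eqP-> u v uA vA uv; exfalso.
    have : #|[set u; v]| <= #|A|.
      by apply: subset_leq_card; rewrite subUset !sub1set uA vA.
    by rewrite cards2 uv; move: hA; rewrite expn0 exp1n; lia.
  - by move=> x xA; exists A; rewrite ?inE.
  - by rewrite cards1 expn0 exp1n; lia.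
set k := 2 ^ i.
have k0 : 0 < k by rewrite expn_gt0.
have [F1 [B [cF1 covF1 cB hF1]]] := @extract T e He q.+1 Hs k k0 _ A (leqnn _).
have [F2 [cF2 covF2 hF2]] := IH B (ltnW cB).
exists (F1 :|: F2); split.
- by move=> X; rewrite inE => /orP[/cF1|/cF2].
- move=> x xA; have [xB|[X XF xX]] := covF1 x xA.
    by have [X XF xX] := covF2 x xB; exists X => //; rewrite inE XF orbT.
  by exists X => //; rewrite inE XF.
- have hF1' : #|F1| <= 2 ^ q.+1 * k ^ q.
    rewrite -(leq_pmul2r k0) -mulnA -expnSr -expnMn -expnS.
    by apply: leq_trans hF1 _.
  have hU : #|F1 :|: F2| <= #|F1| + #|F2| by rewrite cardsU leq_subr.
  have -> : (2 ^ i.+1) ^ q = 2 ^ q * k ^ q by rewrite expnS expnMn.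
  have : 2 <= 2 ^ q.
    have : 2 ^ 1 <= 2 ^ q by rewrite leq_exp2l.
    by [].
  rewrite expnS in hF1'.
  move: (2 ^ q) (k ^ q) hF1' hF2 hU => a b.
  nia.
Qed.

Lemma cover_from_parts (T : finType) (e : rel T) (He : simple_graph e)
  (Parts : {set {set T}}) (cP : forall X, X \in Parts -> is_clique e X)
  (covP : forall x, exists2 X, X \in Parts & x \in X) :
  exists P : {set {set T}}, is_clique_cover e P /\ #|P| <= #|T| * #|Parts|.
Proof.
have [Hsym Hirr] := He.
pose f (p : T * {set T}) := p.1 |: [set u in p.2 | e p.1 u].
exists [set f p | p in setX [set: T] Parts]; split; last first.
  by rewrite -cardsT -cardsX leq_imset_card.
split.
- move=> X /imsetP [[v Q]]; rewrite inE /= => /andP[_ QP] ->.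
  rewrite /f /= => x y; rewrite !inE => /orP[/eqP->|/andP[xQ exv]]
     /orP[/eqP->|/andP[yQ eyv]]; rewrite ?eqxx // => xy.
  + by rewrite Hsym.
  + by apply: (cP Q).
- move=> u v euv.
  have [Q QP uQ] := covP u.
  exists (f (v, Q)).
    by apply/imsetP; exists (v, Q) => //; rewrite inE /= in_setT QP.
  by rewrite /f /= !inE eqxx uQ Hsym euv orbT.
Qed.

Lemma INR_expn (K m : nat) : INR (K ^ m) = (INR K ^ m)%R.
Proof.
elim: m => [|m IH]; first by rewrite expn0.
by rewrite expnS mulnE mult_INR IH.
Qed.

Lemma INR_muln (a b : nat) : INR (a * b) = (INR a * INR b)%R.
Proof. by rewrite mulnE mult_INR. Qed.

Lemma real_bound (n K q : nat) : K ^ q.+1 < n ->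
  (INR n * INR K ^ q <= Rpower (INR n) (2 - / INR q.+1))%R.
Proof.
move=> hK.
have n0 : (0 < INR n)%R by apply: lt_0_INR; apply/ltP; lia.
have q0 : (0 < INR q.+1)%R by apply: lt_0_INR; apply/ltP.
set x := Rpower (INR n) (/ INR q.+1).
have x0 : (0 < x)%R by apply: exp_pos.
have xq : (x ^ q.+1)%R = INR n.
  rewrite -Rpower_pow // /x Rpower_mult Rinv_l ?Rpower_1 //; lra.
have Kx : (INR K < x)%R.
  apply: Rnot_le_lt => hx.
  have := pow_incr _ _ q.+1 (conj (Rlt_le _ _ x0) hx).
  rewrite xq -INR_expn => /INR_le /leP; lia.
have : (INR K ^ q <= x ^ q)%R.
  by apply: pow_incr; split; [apply: pos_INR | apply: Rlt_le].
move=> h.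
apply: Rle_trans (Rmult_le_compat_l _ _ _ (Rlt_le _ _ n0) h) _.
rewrite -Rpower_pow // /x Rpower_mult.
rewrite -{1}(Rpower_1 (INR n)) // -Rpower_plus.
right; f_equal.
rewrite S_INR in q0 *; field; lra.
Qed.

Theorem mainTheorem2 (s : nat) (hs : (3 <= s)%N) :
  exists C : R, (0 < C)%R /\
    forall (T : finType) (e : rel T),
      simple_graph e ->
      (forall S : {set T}, #|S| = s -> ~ is_stable e S) ->
      exists P : {set {set T}},
        is_clique_cover e P /\
        (INR #|P| <= C * Rpower (INR #|T|) (2 - / INR (s - 1)))%R.
Proof.
set q := (s - 2)%N.
have es : s = q.+2 by rewrite /q; lia.
have q1 : (0 < q)%N by rewrite /q; lia.
have C0 : (0 < 4 * 2 ^ q)%N by rewrite muln_gt0 expn_gt0.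
exists (INR (4 * 2 ^ q)); split; first by apply: lt_0_INR; apply/ltP.
move=> T e He Hs.
have Hs' : forall S : {set T}, #|S| = q.+2 -> ~ is_stable e S by rewrite -es.
have exi : exists i, (#|T| <= (2 ^ i) ^ q.+1)%N.
  exists #|T|; rewrite expnS.
  have h1 := ltn_expl #|T| (isT : (1 < 2)%N).
  have h3 : (0 < (2 ^ #|T|) ^ q)%N by rewrite expn_gt0 expn_gt0.
  move: (2 ^ #|T|) ((2 ^ #|T|) ^ q) h1 h3 => a b; nia.
case: (ex_minnP exi) => i hi hmin.
have hT : (#|[set: T]| <= (2 ^ i) ^ q.+1)%N by rewrite cardsT.
have [Parts [cP covP hP]] := @coverpow T e He q q1 Hs' i setT hT.
have covP' : forall x, exists2 X, X \in Parts & x \in X.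
  by move=> x; apply: covP; rewrite in_setT.
have [P [cov hPc]] := @cover_from_parts T e He Parts cP covP'.
exists P; split => //.
have -> : (s - 1)%N = q.+1 by rewrite es; lia.
have Rp0 : forall y, (0 < Rpower (INR #|T|) y)%R by move=> y; apply: exp_pos.
case: i hi hmin hP hT => [|j] hi hmin hP hT.
  have : (#|T| <= 1)%N by move: hi; rewrite expn0 exp1n.
  case: #|T| hPc Rp0 => [|[|//]] hPc Rp0 _.
    have -> : #|P| = 0%N by lia.
    by rewrite /= ; apply: Rlt_le; apply: Rmult_lt_0_compat => //; apply: lt_0_INR; apply/ltP.
  rewrite /Rpower /= ln_1 Rmult_0_r exp_0 Rmult_1_r.
  apply: le_INR; apply/leP; move: hP hPc; rewrite expn0 exp1n => h1 h2.
  apply: leq_trans h2 _; rewrite mul1n; apply: leq_trans h1 _; by rewrite leq_mul2l expn_gt0.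
have hlt : ((2 ^ j) ^ q.+1 < #|T|)%N.
  by rewrite ltnNge; apply/negP => /hmin; rewrite ltnn.
have hP2 : (#|P| <= 4 * 2 ^ q * (#|T| * (2 ^ j) ^ q))%N.
  apply: leq_trans hPc _.
  rewrite mulnCA leq_mul2l; apply/orP; right.
  by move: hP; rewrite expnS expnMn mulnA.
apply: Rle_trans; first by apply: le_INR; apply/leP; exact: hP2.
rewrite (INR_muln (4 * 2 ^ q)).
apply: Rmult_le_compat_l; first by apply: pos_INR.
rewrite INR_muln INR_expn.
exact: real_bound.
Qed.
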